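(* Assume $A$ is finite, each $f_a$ is differentiable on $(0,1]$ with $f_a'>0$, $\phi_a=1/f_a'$. Let $\mathcal D_0\subseteq\mathcal D$ be open, $\theta\in\mathcal D_0$, and assume $\alpha$ and each $p_{\cdot,a}$ are differentiable at $\theta$ with $\sum_a\partial p_{\theta,a}/\partial\theta_j=0$, and that $g_{i,j}(\theta)$ exists. Then for all $i,j$, $$I_{i,j}(\theta)=z(\theta)\,g_{i,j}(\theta)=z(\theta)^2\,\sigma_{i,j}(\theta).$$
   Context: Let $A$ be a finite set, $\mathcal M_1^+(A)$ the probability distributions on $A$. For each $a$, $h_a:[0,1]\to\mathbb R$ is continuous, strictly concave, $h_a(0)=h_a(1)=0$, differentiable on $(0,1)$ with $h_a'=-f_a$; $I(p)=\sum_ah_a(p_a)$. $H_1,\dots,H_n:A\to\mathbb R$, $\langle p,X\rangle=\sum_ap_aX(a)$. $p^*$ satisfies the variational principle with parameters $\theta\in\mathbb R^n$ if $+\infty>I(p^* )-\sum_j\theta_j\langle p^*,H_j\rangle\ge I(p)-\sum_j\theta_j\langle p,H_j\rangle$ for all $p$. $\mathcal D$ is the set of $\theta$ for which such $p^*$ exists; it is unique, denoted $p_\theta$, and there is $\alpha(\theta)\in\mathbb R$ with $f_a(p_{\theta,a})=-\alpha(\theta)-\sum_j\theta_jH_j(a)$ whenever $p_{\theta,a}>0$. Massieu function: $\Phi(\theta)=I(p_\theta)-\sum_j\theta_j\langle p_\theta,H_j\rangle$; metric tensor $g_{i,j}(\theta)=\partial^2\Phi/\partial\theta_i\partial\theta_j$.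 Let $z(\theta)=\sum_{a:p_{\theta,a}>0}\phi_a(p_{\theta,a})$ and escort distribution $P_{\theta,a}=\phi_a(p_{\theta,a})/z(\theta)$ if $p_{\theta,a}>0$, $P_{\theta,a}=0$ otherwise. Score variables $X_{i,a}(\theta)=\frac1{P_{\theta,a}}\frac{\partial}{\partial\theta_i}p_{\theta,a}$ (for $P_{\theta,a}>0$); generalised Fisher information $I_{i,j}(\theta)=\sum_{a:P_{\theta,a}>0}P_{\theta,a}X_{i,a}(\theta)X_{j,a}(\theta)$; covariance $\sigma_{i,j}(\theta)=\langle P_\theta,H_iH_j\rangle-\langle P_\theta,H_i\rangle\langle P_\theta,H_j\rangle$. *)

(* Defs.v *)
From Stdlib Require Import Reals Lra Lia.
Open Scope R_scope.

(* Finite index sets: A = {0,..,m-1}, parameters indexed by {0,..,n-1}.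
   Vectors in R^n are represented as functions nat -> R (only the
   coordinates < n are relevant). *)

Fixpoint sumR (k : nat) (f : nat -> R) : R :=
  match k with
  | O => 0
  | S k' => sumR k' f + f k'
  end.

Definition distr (m : nat) (p : nat -> R) : Prop :=
  (forall a, (a < m)%nat -> 0 <= p a) /\ sumR m p = 1.

Definition pair (m : nat) (p X : nat -> R) : R := sumR m (fun a => p a * X a).

Definition Ient (m : nat) (h : nat -> R -> R) (p : nat -> R) : R :=
  sumR m (fun a => h a (p a)).

Definition Gfun (m n : nat) (h : nat -> R -> R) (H : nat -> nat -> R)
  (theta : nat -> R) (p : nat -> R) : R :=
  Ient m h p - sumR n (fun j => theta j * pair m p (H j)).

Definition VP (m n : nat) (h : nat -> R -> R) (H : nat -> nat -> R)
  (theta : nat -> R) (q : nat -> R) : Prop :=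
  distr m q /\
  forall p, distr m p -> Gfun m n h H theta p <= Gfun m n h H theta q.

Definition inD (m n : nat) (h : nat -> R -> R) (H : nat -> nat -> R)
  (theta : nat -> R) : Prop := exists q, VP m n h H theta q.

Definition close (n : nat) (theta theta' : nat -> R) (d : R) : Prop :=
  forall j, (j < n)%nat -> Rabs (theta' j - theta j) < d.

Definition open_Rn (n : nat) (S : (nat -> R) -> Prop) : Prop :=
  forall theta, S theta -> exists d, 0 < d /\
    forall theta', close n theta theta' d -> S theta'.

Definition differentiable_at (n : nat) (F : (nat -> R) -> R) (theta : nat -> R)
  : Prop :=
  exists L : nat -> R, forall eps, 0 < eps -> exists d, 0 < d /\
    forall theta', close n theta theta' d ->
      Rabs (F theta' - F theta - sumR n (fun j => L j * (theta' j - theta j)))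
        <= eps * sumR n (fun j => Rabs (theta' j - theta j)).

Definition upd (theta : nat -> R) (j : nat) (t : R) : nat -> R :=
  fun k => if Nat.eqb k j then t else theta k.

Definition partial (F : (nat -> R) -> R) (theta : nat -> R) (j : nat) (l : R)
  : Prop := derivable_pt_lim (fun t => F (upd theta j t)) (theta j) l.

Definition second_partial (n : nat) (F : (nat -> R) -> R) (theta : nat -> R)
  (i j : nat) (g : R) : Prop :=
  exists d, 0 < d /\ exists G : (nat -> R) -> R,
    (forall theta', close n theta theta' d -> partial F theta' j (G theta')) /\
    partial G theta i g.

Definition deriv_within (D : R -> Prop) (f : R -> R) (x l : R) : Prop :=
  forall eps, 0 < eps -> exists d, 0 < d /\
    forall y, D y -> y <> x -> Rabs (y - x) < d ->
      Rabs ((f y - f x) / (y - x) - l) < eps.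

Definition strictly_concave_01 (f : R -> R) : Prop :=
  forall x y t, 0 <= x <= 1 -> 0 <= y <= 1 -> x <> y -> 0 < t < 1 ->
    f (t * x + (1 - t) * y) > t * f x + (1 - t) * f y.

Definition on_supp (x : R) (v : R) : R :=
  if Rlt_dec 0 x then v else 0.

Definition Massieu (m n : nat) (h : nat -> R -> R) (H : nat -> nat -> R)
  (p : (nat -> R) -> nat -> R) (theta : nat -> R) : R :=
  Gfun m n h H theta (p theta).

Definition zfun (m : nat) (phi : nat -> R -> R) (q : nat -> R) : R :=
  sumR m (fun a => on_supp (q a) (phi a (q a))).

Definition escort (m : nat) (phi : nat -> R -> R) (q : nat -> R) (a : nat) : R :=
  on_supp (q a) (phi a (q a) / zfun m phi q).

(* generalised Fisher information, given dp i a = d p_{theta,a} / d theta_i: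
   X_{i,a} = dp i a / P_a, I_{ij} = sum_{a : P_a > 0} P_a X_{i,a} X_{j,a} *)
Definition fisher (m : nat) (phi : nat -> R -> R) (q : nat -> R)
  (dp : nat -> nat -> R) (i j : nat) : R :=
  sumR m (fun a => let P := escort m phi q a in
    on_supp P (P * (dp i a / P) * (dp j a / P))).

Definition covar (m : nat) (phi : nat -> R -> R) (q : nat -> R)
  (H : nat -> nat -> R) (i j : nat) : R :=
  pair m (escort m phi q) (fun a => H i a * H j a)
  - pair m (escort m phi q) (H i) * pair m (escort m phi q) (H j).

Definition cont_within (D : R -> Prop) (f : R -> R) (x : R) : Prop :=
  forall eps, 0 < eps -> exists d, 0 < d /\
    forall y, D y -> Rabs (y - x) < d -> Rabs (f y - f x) < eps.

(* Main.v *)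
Require Import Defs.
From Stdlib Require Import Reals Lra Lia FunctionalExtensionality.
Open Scope R_scope.


Lemma sumR_ext m f g : (forall a, (a < m)%nat -> f a = g a) -> sumR m f = sumR m g.
Proof. induction m; simpl; intros Hfg; auto. rewrite IHm by (intros; apply Hfg; lia). rewrite Hfg by lia. auto. Qed.

Lemma sumR_lin4 m c1 c2 c3 c4 u1 u2 u3 u4 :
  sumR m (fun a => c1 * u1 a + c2 * u2 a + c3 * u3 a + c4 * u4 a) =
  c1 * sumR m u1 + c2 * sumR m u2 + c3 * sumR m u3 + c4 * sumR m u4.
Proof. induction m; simpl; [ring| rewrite IHm; ring]. Qed.

Lemma sumR_nonneg m q : (forall b, (b<m)%nat -> 0 <= q b) -> 0 <= sumR m q.
Proof. induction m; simpl; intros Hq; [lra|]. assert (0 <= sumR m q) by (apply IHm; intros; apply Hq; lia). assert (0 <= q m) by (apply Hq; lia). lra. Qed.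

Lemma sumR_le_term m q a : (forall b, (b<m)%nat -> 0 <= q b) -> (a<m)%nat -> q a <= sumR m q.
Proof. induction m; intros Hq Ha; [lia|]. simpl.
  assert (0 <= sumR m q) by (apply sumR_nonneg; intros; apply Hq; lia).
  assert (0 <= q m) by (apply Hq; lia).
  destruct (Nat.eq_dec a m) as [->|Hne]; [lra|].
  assert (q a <= sumR m q) by (apply IHm; [intros; apply Hq; lia| lia]). lra. Qed.

Lemma sumR_ex_nz m q : sumR m q <> 0 -> exists a, (a<m)%nat /\ q a <> 0.
Proof. induction m; simpl; intros Hs; [lra|].
  destruct (Req_dec (q m) 0) as [E|E].
  - destruct IHm as [a [Ha Hq]]; [lra|]. exists a; split; auto; lia.
  - exists m; split; auto. Qed.

Lemma sumR_upd n th i t c : (i < n)%nat ->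
  sumR n (fun k => upd th i t k * c k) = sumR n (fun k => th k * c k) + (t - th i) * c i.
Proof. induction n; intros Hi; [lia|]. simpl.
  assert (Hn : upd th i t n = if Nat.eqb n i then t else th n) by reflexivity.
  destruct (Nat.eq_dec i n) as [->|Hne].
  - rewrite (sumR_ext n (fun k => upd th n t k * c k) (fun k => th k * c k)).
    + unfold upd. rewrite Nat.eqb_refl. ring.
    + intros a Ha. unfold upd. destruct (Nat.eqb_spec a n); [lia|auto].
  - rewrite IHn by lia. unfold upd at 1. destruct (Nat.eqb_spec n i); [lia|]. ring. Qed.

Lemma upd_same th j : upd th j (th j) = th.
Proof. apply functional_extensionality; intro k; unfold upd. destruct (Nat.eqb_spec k j); subst; auto. Qed.

Lemma close_upd n th i t d : 0 < d -> Rabs (t - th i) < d -> close n th (upd th i t) d.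
Proof. intros Hd Ht k Hk. unfold upd. destruct (Nat.eqb_spec k i); subst; auto.
  rewrite Rminus_diag, Rabs_R0; auto. Qed.

Lemma deriv_local f g x l : derivable_pt_lim f x l ->
  (exists d, 0 < d /\ forall y, Rabs (y - x) < d -> f y = g y) -> derivable_pt_lim g x l.
Proof. intros Hf [d [Hd E]] eps Heps. destruct (Hf eps Heps) as [dl Hdl].
  assert (Hm : 0 < Rmin dl d) by (apply Rmin_glb_lt; [apply cond_pos| auto]).
  exists (mkposreal _ Hm). intros h hne hlt. simpl in hlt.
  rewrite <- (E (x+h)), <- (E x).
  - apply Hdl; auto. apply Rlt_le_trans with (1:=hlt), Rmin_l.
  - rewrite Rminus_diag, Rabs_R0; auto.
  - replace (x + h - x) with h by ring. apply Rlt_le_trans with (1:=hlt), Rmin_r. Qed.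

Lemma envelope f x l c d : derivable_pt_lim f x l -> 0 < d ->
  (forall y, Rabs (y - x) < d -> f x + c * (y - x) <= f y) -> l = c.
Proof. intros Hf Hd Hy.
  destruct (Rtotal_order l c) as [Hlt|[Heq|Hgt]]; auto; exfalso.
  - destruct (Hf (c - l)) as [dl Hdl]; [lra|].
    set (h := Rmin dl d / 2).
    assert (Hm : 0 < Rmin dl d) by (apply Rmin_glb_lt; [apply cond_pos| auto]).
    assert (Hh : 0 < h) by (unfold h; lra).
    assert (Hh1 : h < dl) by (unfold h; pose proof (Rmin_l dl d); lra).
    assert (Hh2 : h < d) by (unfold h; pose proof (Rmin_r dl d); lra).
    assert (A := Hdl h ltac:(lra) ltac:(rewrite Rabs_right; lra)).
    assert (B := Hy (x + h) ltac:(replace (x+h-x) with h by ring; rewrite Rabs_right; lra)).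
    set (q := (f (x + h) - f x) / h) in A.
    assert (Eq : q * h = f (x+h) - f x) by (unfold q; field; lra).
    apply Rabs_def2 in A. nra.
  - destruct (Hf (l - c)) as [dl Hdl]; [lra|].
    set (h := - (Rmin dl d / 2)).
    assert (Hm : 0 < Rmin dl d) by (apply Rmin_glb_lt; [apply cond_pos| auto]).
    assert (Hh : h < 0) by (unfold h; lra).
    assert (Hh1 : -h < dl) by (unfold h; pose proof (Rmin_l dl d); lra).
    assert (Hh2 : -h < d) by (unfold h; pose proof (Rmin_r dl d); lra).
    assert (A := Hdl h ltac:(lra) ltac:(rewrite Rabs_left; lra)).
    assert (B := Hy (x + h) ltac:(replace (x+h-x) with h by ring; rewrite Rabs_left; lra)).
    set (q := (f (x + h) - f x) / h) in A.
    assert (Eq : q * h = f (x+h) - f x) by (unfold q; field; lra).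
    apply Rabs_def2 in A. nra.
Qed.

Lemma deriv_sum m (F : nat -> R -> R) (L : nat -> R) x :
  (forall a, (a<m)%nat -> derivable_pt_lim (F a) x (L a)) ->
  derivable_pt_lim (fun t => sumR m (fun a => F a t)) x (sumR m L).
Proof. induction m; intros HF; simpl.
  - apply derivable_pt_lim_const.
  - apply (derivable_pt_lim_plus (fun t => sumR m (fun a => F a t)) (F m)).
    + apply IHm; intros; apply HF; lia.
    + apply HF; lia. Qed.

Lemma pos_near u t0 l : derivable_pt_lim u t0 l -> 0 < u t0 ->
  exists d, 0 < d /\ forall t, Rabs (t - t0) < d -> 0 < u t.
Proof. intros Hu Hp. destruct (Hu 1 Rlt_0_1) as [dl Hdl].
  assert (Hl : 0 < Rabs l + 1) by (pose proof (Rabs_pos l); lra).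
  exists (Rmin dl (u t0 / (Rabs l + 1))). split.
  { apply Rmin_glb_lt; [apply cond_pos| apply Rdiv_lt_0_compat; auto]. }
  intros t Ht. destruct (Req_dec t t0) as [->|Hne]; auto.
  set (h := t - t0).
  assert (A := Hdl h ltac:(unfold h; lra) ltac:(apply Rlt_le_trans with (1:=Ht), Rmin_l)).
  assert (Hh : Rabs h < u t0 / (Rabs l + 1)) by (apply Rlt_le_trans with (1:=Ht), Rmin_r).
  replace (t0 + h) with t in A by (unfold h; ring).
  set (q := (u t - u t0) / h) in A.
  assert (Eq : u t - u t0 = q * h) by (unfold q; field; unfold h; lra).
  assert (Hq : Rabs q < Rabs l + 1).
  { pose proof (Rabs_triang (q - l) l). replace (q - l + l) with q in H by ring. lra. }
  assert (Hqh : Rabs (q * h) < u t0).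
  { rewrite Rabs_mult. apply Rle_lt_trans with ((Rabs l + 1) * Rabs h).
    - apply Rmult_le_compat_r; [apply Rabs_pos| lra].
    - apply Rmult_lt_reg_r with (/ (Rabs l + 1)). apply Rinv_0_lt_compat; lra.
      replace ((Rabs l + 1) * Rabs h * / (Rabs l + 1)) with (Rabs h) by (field; lra).
      exact Hh. }
  rewrite <- Eq in Hqh. apply Rabs_def2 in Hqh. lra. Qed.


Lemma chain_within (f u : R -> R) fl ul t0 :
  deriv_within (fun y => 0 < y <= 1) f (u t0) fl -> derivable_pt_lim u t0 ul ->
  (exists d, 0 < d /\ forall t, Rabs (t - t0) < d -> 0 < u t <= 1) ->
  derivable_pt_lim (fun t => f (u t)) t0 (fl * ul).
Proof. intros Hf Hu [d [Hd Hdom]].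
  set (x := u t0).
  assert (Hx : 0 < x <= 1) by (apply Hdom; rewrite Rminus_diag, Rabs_R0; auto).
  set (F := fun y => if Rlt_dec 0 y then if Rle_dec y 1 then f y else f x + fl * (y - x)
                     else f x + fl * (y - x)).
  assert (FD : forall y, 0 < y <= 1 -> F y = f y).
  { intros y Hy; unfold F; destruct (Rlt_dec 0 y); [destruct (Rle_dec y 1)|]; lra. }
  assert (FN : forall y, ~ (0 < y <= 1) -> F y = f x + fl * (y - x)).
  { intros y Hy; unfold F; destruct (Rlt_dec 0 y); [destruct (Rle_dec y 1)|]; auto; lra. }
  assert (HF : derivable_pt_lim F x fl).
  { intros eps Heps. destruct (Hf eps Heps) as [dl [Hdl H]].
    exists (mkposreal _ Hdl). intros h hne hlt. simpl in hlt.
    rewrite (FD x Hx).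
    destruct (Rlt_dec 0 (x+h)) as [a|a]; [destruct (Rle_dec (x+h) 1) as [b|b]|].
    - rewrite (FD (x+h)) by (split; assumption).
      assert (K1 : 0 < x + h <= 1) by (split; assumption).
      assert (K2 : x + h <> u t0) by (intro; apply hne; unfold x in *; lra).
      assert (K3 : Rabs (x + h - u t0) < dl) by (unfold x; replace (u t0+h-u t0) with h by ring; auto).
      assert (K := H (x+h) K1 K2 K3).
      fold x in K. replace (x+h-x) with h in K by ring. exact K.
    - rewrite FN by lra. replace ((f x + fl * (x + h - x) - f x) / h - fl) with 0 by (field; auto).
      rewrite Rabs_R0; auto.
    - rewrite FN by lra. replace ((f x + fl * (x + h - x) - f x) / h - fl) with 0 by (field; auto).
      rewrite Rabs_R0; auto. }
  apply deriv_local with (comp F u).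
  - apply derivable_pt_lim_comp; auto.
  - exists d; split; auto. intros y Hy. unfold comp. apply FD, Hdom; auto. Qed.

Lemma deriv_mulc f x l c : derivable_pt_lim f x l ->
  derivable_pt_lim (fun t => f t * c) x (l * c).
Proof. intros Hf. replace (l * c) with (c * l) by ring.
  apply deriv_local with (mult_real_fct c f).
  - apply derivable_pt_lim_scal; auto.
  - exists 1; split; [lra|]. intros; unfold mult_real_fct; ring. Qed.

Lemma deriv_aff S c b x : derivable_pt_lim (fun t => S + (t - c) * b) x b.
Proof. intros eps Heps. exists (mkposreal _ Heps). intros h hne hlt.
  replace ((S + (x + h - c) * b - (S + (x - c) * b)) / h - b) with 0 by (field; auto).
  rewrite Rabs_R0; auto. Qed.

Theorem mainTheorem10
  (m n : nat)                          (* |A| = m, A = {0..m-1}; n parameters *)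
  (h f f' : nat -> R -> R)             (* h_a, f_a, f_a' *)
  (H : nat -> nat -> R)                (* H j a = H_j(a) *)
  (hcont : forall a, (a < m)%nat -> forall x, 0 <= x <= 1 -> cont_within (fun y => 0 <= y <= 1) (h a) x)
  (hconc : forall a, (a < m)%nat -> strictly_concave_01 (h a))
  (h0 : forall a, (a < m)%nat -> h a 0 = 0)
  (h1 : forall a, (a < m)%nat -> h a 1 = 0)
  (hder : forall a, (a < m)%nat -> forall x, 0 < x < 1 ->
            derivable_pt_lim (h a) x (- f a x))
  (fder : forall a, (a < m)%nat -> forall x, 0 < x <= 1 ->
            deriv_within (fun y => 0 < y <= 1) (f a) x (f' a x))
  (fpos : forall a, (a < m)%nat -> forall x, 0 < x <= 1 -> 0 < f' a x)
  (p : (nat -> R) -> nat -> R)         (* theta |-> p_theta *)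
  (hp : forall th, inD m n h H th -> VP m n h H th (p th))
  (alpha : (nat -> R) -> R)
  (halpha : forall th, inD m n h H th -> forall a, (a < m)%nat -> 0 < p th a ->
            f a (p th a) = - alpha th - sumR n (fun j => th j * H j a))
  (D0 : (nat -> R) -> Prop)
  (hD0 : forall th, D0 th -> inD m n h H th)
  (hD0open : open_Rn n D0)
  (theta : nat -> R)
  (htheta : D0 theta)
  (halpha_diff : differentiable_at n alpha theta)
  (hp_diff : forall a, (a < m)%nat -> differentiable_at n (fun th => p th a) theta)
  (dp : nat -> nat -> R)               (* dp i a = d p_{theta,a} / d theta_i *)
  (hdp : forall i a, (i < n)%nat -> (a < m)%nat ->
           partial (fun th => p th a) theta i (dp i a))
  (hsum : forall j, (j < n)%nat -> sumR m (fun a => dp j a) = 0)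
  (hg : forall i j, (i < n)%nat -> (j < n)%nat ->
          exists g, second_partial n (Massieu m n h H p) theta i j g) :
  let phi := fun a x => 1 / f' a x in
  forall i j g, (i < n)%nat -> (j < n)%nat ->
    second_partial n (Massieu m n h H p) theta i j g ->
    fisher m phi (p theta) dp i j = zfun m phi (p theta) * g /\
    zfun m phi (p theta) * g =
      zfun m phi (p theta) ^ 2 * covar m phi (p theta) H i j.
Proof.

  intros phi i j g Hi Hj Hsp.
  destruct (hD0open theta htheta) as [d0 [Hd0 Hopen]].
  assert (HD0upd : forall k t, (k<n)%nat -> Rabs (t - theta k) < d0 -> D0 (upd theta k t)).
  { intros k t Hk Ht. apply Hopen, close_upd; auto. }
  assert (Hdistr : forall th, D0 th -> distr m (p th)).
  { intros th Hth. exact (proj1 (hp th (hD0 th Hth))). }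
  assert (Henv : forall th, D0 th -> forall k l, (k<n)%nat ->
     partial (Massieu m n h H p) th k l -> l = - pair m (p th) (H k)).
  { intros th Hth k l Hk Hl.
    destruct (hD0open th Hth) as [d1 [Hd1 Hop1]].
    unfold partial in Hl.
    apply (envelope _ _ _ _ d1 Hl Hd1).
    intros y Hy. cbv beta. rewrite upd_same.
    assert (Hy' : D0 (upd th k y)) by (apply Hop1, close_upd; auto).
    destruct (hp _ (hD0 _ Hy')) as [_ Hmax].
    specialize (Hmax (p th) (Hdistr th Hth)).
    unfold Massieu.
    eapply Rle_trans; [|exact Hmax].
    unfold Gfun.
    assert (E := sumR_upd n th k y (fun j0 => pair m (p th) (H j0)) Hk). cbv beta in E.
    rewrite E. right; ring. }
  assert (Hgv : g = - sumR m (fun a => dp i a * H j a)).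
  { destruct Hsp as [d [Hd [G [HG1 HG2]]]].
    unfold partial in HG2.
    assert (Hder : derivable_pt_lim (fun t => - pair m (p (upd theta i t)) (H j)) (theta i)
                     (- sumR m (fun a => dp i a * H j a))).
    { apply (derivable_pt_lim_opp (fun t => pair m (p (upd theta i t)) (H j))).
      unfold pair.
      apply (deriv_sum m (fun a t => p (upd theta i t) a * H j a)).
      intros a Ha. apply deriv_mulc. exact (hdp i a Hi Ha). }
    eapply uniqueness_limite; [exact HG2|].
    apply deriv_local with (1 := Hder).
    exists (Rmin d d0). split; [apply Rmin_glb_lt; auto|].
    intros y Hy. symmetry. apply (Henv _ (HD0upd i y Hi (Rlt_le_trans _ _ _ Hy (Rmin_r _ _))) j _ Hj).
    apply HG1. apply close_upd; auto. eapply Rlt_le_trans; [exact Hy| apply Rmin_l]. }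
  assert (Hz : forall k a, (k<n)%nat -> (a<m)%nat -> p theta a = 0 -> dp k a = 0).
  { intros k a Hk Ha Hpa. pose proof (hdp k a Hk Ha) as Hd. unfold partial in Hd.
    apply (envelope _ _ _ _ d0 Hd Hd0). intros y Hy. cbv beta. rewrite upd_same, Hpa.
    destruct (Hdistr _ (HD0upd k y Hk Hy)) as [Hnn _]. specialize (Hnn a Ha). lra. }
  destruct (Hdistr theta htheta) as [Hnn Hs1].
  assert (Hle1 : forall a, (a<m)%nat -> p theta a <= 1).
  { intros; rewrite <- Hs1; apply sumR_le_term; auto. }
  assert (Hal : forall k a, (k<n)%nat -> (a<m)%nat -> 0 < p theta a ->
     derivable_pt_lim (fun t => alpha (upd theta k t)) (theta k) (-(f' a (p theta a) * dp k a) - H k a)).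
  { intros k a Hk Ha Hpa.
    pose proof (hdp k a Hk Ha) as Hd. unfold partial in Hd. cbv beta in Hd.
    destruct (pos_near _ _ _ Hd) as [d1 [Hd1 Hpos]]. { rewrite upd_same; auto. }
    assert (Hdom : exists d, 0 < d /\ forall t, Rabs (t - theta k) < d -> 0 < p (upd theta k t) a <= 1).
    { exists (Rmin d1 d0). split; [apply Rmin_glb_lt; auto|]. intros t Ht. split.
      - apply Hpos. eapply Rlt_le_trans; [exact Ht| apply Rmin_l].
      - destruct (Hdistr _ (HD0upd k t Hk (Rlt_le_trans _ _ _ Ht (Rmin_r _ _)))) as [Hnn' Hs].
        rewrite <- Hs. apply sumR_le_term; auto. }
    assert (Hfw : deriv_within (fun y => 0 < y <= 1) (f a) (p (upd theta k (theta k)) a) (f' a (p theta a))).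
    { rewrite upd_same. apply fder; auto. }
    pose proof (chain_within (f a) (fun t => p (upd theta k t) a) _ _ _ Hfw Hd Hdom) as Hc.
    cbv beta in Hc.
    apply deriv_local with (fun t => - (f a (p (upd theta k t) a)) -
         (sumR n (fun j0 => theta j0 * H j0 a) + (t - theta k) * H k a)).
    - apply (derivable_pt_lim_minus (fun t => - f a (p (upd theta k t) a))
         (fun t => sumR n (fun j0 => theta j0 * H j0 a) + (t - theta k) * H k a)).
      + apply (derivable_pt_lim_opp (fun t => f a (p (upd theta k t) a))). exact Hc.
      + apply deriv_aff.
    - destruct Hdom as [d2 [Hd2 Hdom]].
      exists (Rmin d2 d0). split; [apply Rmin_glb_lt; auto|]. intros y Hy.
      assert (HDy : D0 (upd theta k y)) by (apply HD0upd; auto; eapply Rlt_le_trans; [exact Hy| apply Rmin_r]).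
      assert (Hpy : 0 < p (upd theta k y) a) by (apply Hdom; eapply Rlt_le_trans; [exact Hy| apply Rmin_l]).
      pose proof (halpha _ (hD0 _ HDy) a Ha Hpy) as E.
      assert (E2 := sumR_upd n theta k y (fun j0 => H j0 a) Hk). cbv beta in E2.
      rewrite E2 in E. lra. }
  destruct (sumR_ex_nz m (p theta)) as [a0 [Ha0 Hpa0]]; [lra|].
  assert (Hpa0' : 0 < p theta a0) by (specialize (Hnn a0 Ha0); lra).
  pose (K := fun k => f' a0 (p theta a0) * dp k a0 + H k a0).
  pose (w := fun a => on_supp (p theta a) (phi a (p theta a))).
  assert (Hdp : forall k a, (k<n)%nat -> (a<m)%nat -> dp k a = w a * (K k - H k a)).
  { intros k a Hk Ha. unfold w, on_supp. destruct (Rlt_dec 0 (p theta a)) as [Hp|Hp].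
    - pose proof (uniqueness_limite _ _ _ _ (Hal k a Hk Ha Hp) (Hal k a0 Hk Ha0 Hpa0')) as E.
      assert (Hf' : 0 < f' a (p theta a)) by (apply fpos; auto).
      unfold K, phi. replace (f' a0 (p theta a0) * dp k a0 + H k a0 - H k a) with (f' a (p theta a) * dp k a) by lra.
      field; lra.
    - rewrite Hz; auto; [ring|]. specialize (Hnn a Ha); lra. }
  assert (Hwnn : forall a, (a<m)%nat -> 0 <= w a).
  { intros a Ha. unfold w, on_supp, phi. destruct (Rlt_dec 0 (p theta a)) as [Hp|Hp]; [|lra].
    assert (Hf' : 0 < f' a (p theta a)) by (apply fpos; auto).
    left; apply Rdiv_lt_0_compat; lra. }
  assert (Hw0 : 0 < w a0).
  { unfold w, on_supp, phi. destruct (Rlt_dec 0 (p theta a0)) as [Hp|Hp]; [|lra].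
    assert (Hf' : 0 < f' a0 (p theta a0)) by (apply fpos; auto).
    apply Rdiv_lt_0_compat; lra. }
  assert (HZ : zfun m phi (p theta) = sumR m w) by reflexivity.
  assert (HZpos : 0 < sumR m w).
  { apply Rlt_le_trans with (w a0); auto. apply sumR_le_term; auto. }
  assert (Hesc : forall a, (a<m)%nat -> escort m phi (p theta) a = w a / sumR m w).
  { intros a Ha. unfold escort. rewrite HZ. unfold w, on_supp.
    destruct (Rlt_dec 0 (p theta a)); [reflexivity| unfold Rdiv; ring]. }
  assert (Hsk : forall k, (k<n)%nat -> K k * sumR m w - sumR m (fun a => w a * H k a) = 0).
  { intros k Hk. rewrite <- (hsum k Hk).
    rewrite (sumR_ext m (fun a => dp k a) (fun a => K k * w a + (-1) * (w a * H k a) + 0 * w a + 0 * w a)).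
    - rewrite sumR_lin4. ring.
    - intros a Ha. rewrite Hdp by auto. ring. }
  assert (Eg : g = - (K i * sumR m (fun a => w a * H j a) - sumR m (fun a => w a * (H i a * H j a)))).
  { rewrite Hgv.
    rewrite (sumR_ext m (fun a => dp i a * H j a) (fun a => K i * (w a * H j a) + (-1) * (w a * (H i a * H j a)) + 0 * w a + 0 * w a)).
    - rewrite sumR_lin4. ring.
    - intros a Ha. rewrite Hdp by auto. ring. }
  assert (Ef : fisher m phi (p theta) dp i j =
     (sumR m w * K i * K j) * sumR m w + (- (sumR m w * K i)) * sumR m (fun a => w a * H j a)
     + (- (sumR m w * K j)) * sumR m (fun a => w a * H i a)
     + sumR m w * sumR m (fun a => w a * (H i a * H j a))).
  { unfold fisher. rewrite <- sumR_lin4. apply sumR_ext. intros a Ha. cbv zeta.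
    rewrite Hesc, Hdp, (Hdp j a) by auto. unfold on_supp.
    destruct (Rlt_dec 0 (w a / sumR m w)) as [Hp|Hp].
    - assert (0 < w a).
      { apply Rmult_lt_reg_r with (/ sumR m w). apply Rinv_0_lt_compat; auto.
        rewrite Rmult_0_l. exact Hp. }
      field. split; lra.
    - assert (w a = 0).
      { destruct (Hwnn a Ha) as [Hlt|Heq]; auto. exfalso; apply Hp. apply Rdiv_lt_0_compat; auto. }
      rewrite H0. ring. }
  assert (Epair : forall X, pair m (escort m phi (p theta)) X = (1 / sumR m w) * sumR m (fun a => w a * X a)).
  { intros X. unfold pair.
    rewrite (sumR_ext m _ (fun a => (1 / sumR m w) * (w a * X a) + 0 * w a + 0 * w a + 0 * w a)).
    - rewrite sumR_lin4. ring.
    - intros a Ha. rewrite Hesc by auto. field. lra. }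
  unfold covar. rewrite !Epair, Ef, HZ, Eg.
  pose proof (Hsk i Hi) as Si. pose proof (Hsk j Hj) as Sj.
  set (Z := sumR m w) in *.
  set (Ai := sumR m (fun a => w a * H i a)) in *.
  set (Aj := sumR m (fun a => w a * H j a)) in *.
  set (B := sumR m (fun a => w a * (H i a * H j a))) in *.
  replace Ai with (K i * Z) by lra. replace Aj with (K j * Z) by lra.
  split; field; lra.
Qed.
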